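(* Let $c>0$, $f_s>0$, let $M,N,K\ge1$ be integers, $T_{\max}=(N-1)/f_s$, $\bm{r}^{\mathrm{mic}}_1,\dots,\bm{r}^{\mathrm{mic}}_M\in\mathbb{R}^3$ with $E_M=\{\bm{r}^{\mathrm{mic}}_m\}$, and $\bm{x}=(x_{m,n})_{1\le m\le M,0\le n\le N-1}\in\mathbb{R}^{MN}$. Let $\lambda>0$ and let $\kappa:\mathbb{R}\to\mathbb{R}$ be continuous and bounded with $\kappa(0)>0$. Define $$\phi=\inf_{t>0}\sum_{n=0}^{N-1}\frac{\kappa(n/f_s)\,\kappa(n/f_s-t)}{4\pi ct},\qquad\mu_m=\sum_{n=0}^{N-1}x_{m,n}\kappa(n/f_s)\quad(1\le m\le M).$$ Then the problem $$\inf_{(\bm{a},\bm{r})\in\mathbb{R}_+^K\times\mathscr{C}^K}\ \frac12\Big\|\bm{x}-\sum_{k=1}^K a_k\gamma(\bm{r}_k)\Big\|_2^2+\lambda\sum_{k=1}^K a_k$$ has at least one solution whenever one of the following holds: (i) $\phi<0$ and $\mu_m\le\frac{\phi}{2\lambda}\|\bm{x}\|_2^2$ for all $m\in\{1,\dots,M\}$; (ii) $\phi\ge0$ and $\mu_m\le0$ for all $m\in\{1,\dots,M\}$.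
   Context: $\mathbb{R}_+=[0,+\infty)$, $\|\cdot\|_2$ Euclidean norm. For $\bm{r}\in\mathbb{R}^3\setminus E_M$, $\gamma(\bm{r})\in\mathbb{R}^{MN}$ with $\gamma_{m,n}(\bm{r})=\dfrac{\kappa\big(n/f_s-\|\bm{r}-\bm{r}^{\mathrm{mic}}_m\|_2/c\big)}{4\pi\|\bm{r}-\bm{r}^{\mathrm{mic}}_m\|_2}$. $\mathscr{C}=\bigcap_{m=1}^M\overline{B(\bm{r}^{\mathrm{mic}}_m,cT_{\max})}\setminus E_M$ (closed Euclidean balls). *)

(* Defs.v *)
From Stdlib Require Import Reals Lra.
From Coquelicot Require Import Coquelicot.
Open Scope R_scope.

Fixpoint rsum (n : nat) (f : nat -> R) : R :=
  match n with O => 0 | S k => rsum k f + f k end.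

Definition pt3 := (R * R * R)%type.

Definition dist3 (r s : pt3) : R :=
  let '(r1, r2, r3) := r in let '(s1, s2, s3) := s in
  sqrt ((r1 - s1)^2 + (r2 - s2)^2 + (r3 - s3)^2).

(* gamma_{m,n}(r) (microphones / time samples indexed from 0) *)
Definition gamma (kappa : R -> R) (c fs : R) (mic : nat -> pt3)
    (r : pt3) (m n : nat) : R :=
  kappa (INR n / fs - dist3 r (mic m) / c) / (4 * PI * dist3 r (mic m)).

Definition in_EM (M : nat) (mic : nat -> pt3) (r : pt3) : Prop :=
  exists m, (m < M)%nat /\ r = mic m.

Definition inC (c fs : R) (M N : nat) (mic : nat -> pt3) (r : pt3) : Prop :=
  (forall m, (m < M)%nat -> dist3 r (mic m) <= c * (INR (N - 1) / fs)) /\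
  ~ in_EM M mic r.

Definition objective (kappa : R -> R) (c fs lambda : R) (M N K : nat)
    (mic : nat -> pt3) (x : nat -> nat -> R)
    (a : nat -> R) (r : nat -> pt3) : R :=
  / 2 * rsum M (fun m => rsum N (fun n =>
          (x m n - rsum K (fun k => a k * gamma kappa c fs mic (r k) m n)) ^ 2))
  + lambda * rsum K a.

Definition feasible (c fs : R) (M N K : nat) (mic : nat -> pt3)
    (a : nat -> R) (r : nat -> pt3) : Prop :=
  forall k, (k < K)%nat -> 0 <= a k /\ inC c fs M N mic (r k).

Definition is_solution (kappa : R -> R) (c fs lambda : R) (M N K : nat)
    (mic : nat -> pt3) (x : nat -> nat -> R) (a : nat -> R) (r : nat -> pt3) : Prop :=
  feasible c fs M N K mic a r /\
  forall a' r', feasible c fs M N K mic a' r' ->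
    objective kappa c fs lambda M N K mic x a r
      <= objective kappa c fs lambda M N K mic x a' r'.

(* phi = inf_{t>0} sum_n kappa(n/fs) kappa(n/fs - t) / (4 pi c t)  (finite under
   the hypotheses on kappa; we take the real part of the Rbar infimum) *)
Definition phi_val (kappa : R -> R) (c fs : R) (N : nat) : R :=
  real (Glb_Rbar (fun y => exists t, 0 < t /\
     y = rsum N (fun n => kappa (INR n / fs) * kappa (INR n / fs - t) / (4 * PI * c * t)))).

Definition mu (kappa : R -> R) (fs : R) (N : nat) (x : nat -> nat -> R) (m : nat) : R :=
  rsum N (fun n => x m n * kappa (INR n / fs)).

Definition sqnorm_x (M N : nat) (x : nat -> nat -> R) : R :=
  rsum M (fun m => rsum N (fun n => x m n ^ 2)).

(* Main.v *)
Require Import Defs.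
From Stdlib Require Import Reals Lra Lia.
From Coquelicot Require Import Coquelicot.
Open Scope R_scope.

Lemma rsum_ext n f g : (forall i, (i < n)%nat -> f i = g i) -> rsum n f = rsum n g.
Proof. induction n; cbn [rsum]; intros H; [reflexivity|]. rewrite IHn by (intros; apply H; lia). rewrite H by lia. reflexivity. Qed.

Lemma rsum_plus n f g : rsum n (fun i => f i + g i) = rsum n f + rsum n g.
Proof. induction n; cbn [rsum]; [lra|]. rewrite IHn. lra. Qed.

Lemma rsum_minus n f g : rsum n (fun i => f i - g i) = rsum n f - rsum n g.
Proof. induction n; cbn [rsum]; [lra|]. rewrite IHn. lra. Qed.

Lemma rsum_scal n c f : rsum n (fun i => c * f i) = c * rsum n f.
Proof. induction n; cbn [rsum]; [lra|]. rewrite IHn. lra. Qed.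

Lemma rsum_scalr n c f : rsum n (fun i => f i * c) = rsum n f * c.
Proof. induction n; cbn [rsum]; [lra|]. rewrite IHn. lra. Qed.

Lemma rsum_const n c : rsum n (fun _ => c) = INR n * c.
Proof. induction n; cbn [rsum]; [simpl; lra|]. rewrite IHn. rewrite S_INR. lra. Qed.

Lemma rsum_le n f g : (forall i, (i < n)%nat -> f i <= g i) -> rsum n f <= rsum n g.
Proof. induction n; cbn [rsum]; intros H; [lra|]. assert (H1 := H n (Nat.lt_succ_diag_r n)).
  assert (rsum n f <= rsum n g) by (apply IHn; intros; apply H; lia). lra. Qed.

Lemma rsum_ge0 n f : (forall i, (i < n)%nat -> 0 <= f i) -> 0 <= rsum n f.
Proof. intros H. replace 0 with (rsum n (fun _ => 0)). apply rsum_le; auto.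
  rewrite rsum_const; ring. Qed.

Lemma rsum_zero n f : (forall i, (i < n)%nat -> f i = 0) -> rsum n f = 0.
Proof. intros H. rewrite (rsum_ext n f (fun _ => 0)) by auto. rewrite rsum_const; ring. Qed.

Lemma rsum_term_le n f j : (forall i, (i < n)%nat -> 0 <= f i) -> (j < n)%nat -> f j <= rsum n f.
Proof. induction n; cbn [rsum]; intros H Hj; [lia|].
  destruct (Nat.eq_dec j n) as [->|Hne].
  - assert (0 <= rsum n f) by (apply rsum_ge0; intros; apply H; lia). lra.
  - assert (f j <= rsum n f) by (apply IHn; [intros; apply H; lia| lia]).
    assert (0 <= f n) by (apply H; lia). lra. Qed.

Lemma rsum_term_le_L n f j L : 0 <= L -> (forall i, (i < n)%nat -> - L <= f i) -> (j < n)%nat ->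
  f j <= rsum n f + INR n * L.
Proof. intros HL H Hj.
  assert (E : rsum n (fun i => f i + L) = rsum n f + INR n * L) by (rewrite rsum_plus, rsum_const; ring).
  assert (f j + L <= rsum n (fun i => f i + L)).
  { apply (rsum_term_le n (fun i => f i + L)); auto. intros i Hi; specialize (H i Hi); lra. }
  lra. Qed.

Lemma rsum_eq0 n f : (forall i, (i < n)%nat -> 0 <= f i) -> rsum n f = 0 -> forall j, (j < n)%nat -> f j = 0.
Proof. intros H H0 j Hj. assert (f j <= rsum n f) by (apply rsum_term_le; auto).
  assert (0 <= f j) by auto. lra. Qed.

Lemma rsum_swap n m (f : nat -> nat -> R) :
  rsum n (fun i => rsum m (fun j => f i j)) = rsum m (fun j => rsum n (fun i => f i j)).
Proof. induction n; simpl.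
  - symmetry; apply rsum_zero; auto.
  - rewrite IHn. rewrite <- rsum_plus. reflexivity. Qed.

Lemma sq_le_abs u X : u ^ 2 <= X -> Rabs u <= 1 + X.
Proof. intros H. destruct (Rle_dec (Rabs u) 1). { assert (0 <= u^2) by (apply pow2_ge_0). lra. }
  assert (Rabs u <= Rabs u * Rabs u) by nra.
  rewrite <- Rabs_mult in H0. replace (u*u) with (u^2) in H0 by ring. rewrite (Rabs_right (u^2)) in H0 by (apply Rle_ge, pow2_ge_0). lra. Qed.

Lemma dist3_ge0 r s : 0 <= dist3 r s.
Proof. destruct r as [[? ?] ?], s as [[? ?] ?]; simpl; apply sqrt_pos. Qed.

Lemma sq0 u : u^2 = 0 -> u = 0.
Proof. intros H; destruct (Req_dec u 0); auto; exfalso; exact (pow_nonzero u 2 H0 H). Qed.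

Lemma dist3_eq0 r s : dist3 r s = 0 -> r = s.
Proof. destruct r as [[r1 r2] r3], s as [[s1 s2] s3]; simpl. intros H.
  pose proof (pow2_ge_0 (r1 - s1)). pose proof (pow2_ge_0 (r2 - s2)). pose proof (pow2_ge_0 (r3 - s3)).
  apply sqrt_eq_0 in H; [|lra].
  assert (E1 : (r1 - s1)^2 = 0) by lra. assert (E2 : (r2 - s2)^2 = 0) by lra. assert (E3 : (r3 - s3)^2 = 0) by lra.
  apply sq0 in E1. apply sq0 in E2. apply sq0 in E3.
  f_equal; [f_equal|]; lra. Qed.

Lemma dist3_self r : dist3 r r = 0.
Proof. destruct r as [[r1 r2] r3]; simpl. match goal with |- sqrt ?a = 0 => replace a with 0 by ring end. apply sqrt_0. Qed.

Lemma coord_le_sqrt u a : u * u <= a -> Rabs u <= sqrt a.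
Proof. intros H. rewrite <- sqrt_Rsqr_abs. apply sqrt_le_1_alt. unfold Rsqr. exact H. Qed.

Lemma dist3_c1 r1 r2 r3 s : Rabs (r1 - fst (fst s)) <= dist3 (r1, r2, r3) s.
Proof. destruct s as [[s1 s2] s3]; cbn [dist3 fst snd]. apply coord_le_sqrt. pose proof (pow2_ge_0 (r1 - s1)). pose proof (pow2_ge_0 (r2 - s2)). pose proof (pow2_ge_0 (r3 - s3)). simpl in *. lra. Qed.
Lemma dist3_c2 r1 r2 r3 s : Rabs (r2 - snd (fst s)) <= dist3 (r1, r2, r3) s.
Proof. destruct s as [[s1 s2] s3]; cbn [dist3 fst snd]. apply coord_le_sqrt. pose proof (pow2_ge_0 (r1 - s1)). pose proof (pow2_ge_0 (r2 - s2)). pose proof (pow2_ge_0 (r3 - s3)). simpl in *. lra. Qed.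
Lemma dist3_c3 r1 r2 r3 s : Rabs (r3 - snd s) <= dist3 (r1, r2, r3) s.
Proof. destruct s as [[s1 s2] s3]; cbn [dist3 fst snd]. apply coord_le_sqrt. pose proof (pow2_ge_0 (r1 - s1)). pose proof (pow2_ge_0 (r2 - s2)). pose proof (pow2_ge_0 (r3 - s3)). simpl in *. lra. Qed.


Lemma rsum_cont n (F : nat -> R -> R) t :
  (forall i, continuity_pt (F i) t) -> continuity_pt (fun s => rsum n (fun i => F i s)) t.
Proof. intros H; induction n; cbn [rsum].
  - apply continuity_pt_const. intros ? ?; reflexivity.
  - exact (continuity_pt_plus _ _ _ IHn (H n)). Qed.

Lemma term_cont (kappa : R -> R) (Hkc : forall t, continuity_pt kappa t) a b t :
  continuity_pt (fun s => a * kappa (b - s)) t.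
Proof.
  apply (continuity_pt_mult (fun _ => a) (fun s => kappa (b - s))).
  - apply continuity_pt_const; intros ? ?; reflexivity.
  - apply (continuity_pt_comp (fun s => b - s) kappa).
    + apply (continuity_pt_minus (fun _ => b) (fun s => s)).
      * apply continuity_pt_const; intros ? ?; reflexivity.
      * apply derivable_continuous_pt, derivable_pt_id.
    + apply Hkc.
Qed.

Lemma phi_le kappa c fs N (Hc : 0 < c) (HN : (1 <= N)%nat)
  (Hkc : forall t, continuity_pt kappa t) (Hkb : exists B, forall t, Rabs (kappa t) <= B)
  (Hk0 : 0 < kappa 0) :
  forall t, 0 < t -> phi_val kappa c fs N <=
    rsum N (fun n => kappa (INR n / fs) * kappa (INR n / fs - t) / (4 * PI * c * t)).
Proof.
  destruct Hkb as [B HB].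
  set (h := fun s => rsum N (fun n => kappa (INR n / fs) * kappa (INR n / fs - s))).
  assert (hc : continuity_pt h 0).
  { unfold h. apply (rsum_cont N (fun n s => kappa (INR n / fs) * kappa (INR n / fs - s))).
    intros i; apply term_cont; auto. }
  assert (h0 : kappa 0 * kappa 0 <= h 0).
  { unfold h. assert (E : kappa 0 * kappa 0 = (fun n => kappa (INR n / fs) * kappa (INR n / fs - 0)) 0%nat).
    { simpl. unfold Rdiv. rewrite Rmult_0_l, Rminus_0_r. reflexivity. }
    rewrite E. apply (rsum_term_le N (fun n => kappa (INR n / fs) * kappa (INR n / fs - 0))).
    - intros i _. rewrite Rminus_0_r. apply Rle_0_sqr.
    - lia. }
  assert (Hpos : 0 < h 0) by nra.
  destruct (hc (h 0 / 2)) as [al [Hal Hal2]]; [lra|].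
  assert (Sdef : forall s, 0 < s -> rsum N (fun n => kappa (INR n / fs) * kappa (INR n / fs - s) / (4 * PI * c * s)) = h s * / (4 * PI * c * s)).
  { intros s Hs. unfold h. rewrite <- rsum_scalr. apply rsum_ext. intros; unfold Rdiv; reflexivity. }
  assert (B0 : 0 <= B) by (specialize (HB 0); pose proof (Rabs_pos (kappa 0)); lra).
  set (L := INR N * (B * B / (4 * PI * c * al))).
  assert (PIpos := PI_RGT_0).
  assert (H4PIc : 0 < 4 * PI * c) by (apply Rmult_lt_0_compat; [apply Rmult_lt_0_compat; lra | lra]).
  assert (Hlow : forall s, 0 < s -> - L <= rsum N (fun n => kappa (INR n / fs) * kappa (INR n / fs - s) / (4 * PI * c * s))).
  { intros s Hs. destruct (Rlt_dec s al) as [Hsa|Hsa].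
    - rewrite Sdef by exact Hs.
      assert (0 < h s).
      { assert (D : Rabs (h s - h 0) < h 0 / 2).
        { apply Hal2. split. { split; [exact I|]. intros E; lra. } simpl. unfold R_dist. rewrite Rminus_0_r, Rabs_right by lra. exact Hsa. }
        apply Rabs_def2 in D. lra. }
      assert (0 <= L).
      { unfold L. apply Rmult_le_pos; [apply pos_INR|]. unfold Rdiv. apply Rmult_le_pos; [nra|].
        apply Rlt_le, Rinv_0_lt_compat. apply Rmult_lt_0_compat; lra. }
      assert (0 < 4 * PI * c * s) by (apply Rmult_lt_0_compat; lra).
      assert (0 < / (4 * PI * c * s)) by (apply Rinv_0_lt_compat; lra). nra.
    - unfold L. replace (- (INR N * (B * B / (4 * PI * c * al)))) with (INR N * (- (B * B / (4 * PI * c * al)))) by ring.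
      rewrite <- rsum_const. apply rsum_le. intros n _.
      set (u := kappa (INR n / fs)). set (v := kappa (INR n / fs - s)).
      assert (Hu : Rabs u <= B) by apply HB. assert (Hv : Rabs v <= B) by apply HB.
      assert (Huv : Rabs (u * v) <= B * B) by (rewrite Rabs_mult; apply Rmult_le_compat; auto using Rabs_pos).
      assert (H1 : - (B * B) <= u * v) by (pose proof (Rabs_maj2 (u * v)); lra).
      assert (Hp : 0 < 4 * PI * c * al) by (apply Rmult_lt_0_compat; lra).
      assert (Hp2 : 4 * PI * c * al <= 4 * PI * c * s) by (apply Rmult_le_compat_l; [lra|lra]).
      unfold Rdiv.
      assert (0 < / (4 * PI * c * s)) by (apply Rinv_0_lt_compat; lra).
      assert (/ (4 * PI * c * s) <= / (4 * PI * c * al)) by (apply Rinv_le_contravar; auto).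
      assert (0 <= B * B) by nra.
      nra. }
  set (E := fun y => exists t, 0 < t /\ y = rsum N (fun n => kappa (INR n / fs) * kappa (INR n / fs - t) / (4 * PI * c * t))).
  intros t Ht. unfold phi_val. fold E.
  destruct (Glb_Rbar_correct E) as [Hlb Hgr].
  destruct (Glb_Rbar E) as [g| |] eqn:Eg.
  - simpl. specialize (Hlb _ (ex_intro _ t (conj Ht eq_refl))). simpl in Hlb. exact Hlb.
  - exfalso. specialize (Hlb _ (ex_intro _ t (conj Ht eq_refl))). simpl in Hlb. exact Hlb.
  - exfalso. assert (Hb : Rbar_le (Finite (- L)) m_infty).
    { apply Hgr. intros y [s [Hs ->]]. simpl. apply Hlow; exact Hs. }
    simpl in Hb. exact Hb.
Qed.


Definition rk (f : nat * nat -> R) k : pt3 := (f (k, 1%nat), f (k, 2%nat), f (k, 3%nat)).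
Definition bb (f : nat * nat -> R) k m := f (k, S (S (S (S m)))).
Definition Dr c fs N := c * (INR (N - 1) / fs).
Definition relsum kappa c fs mic K (f : nat * nat -> R) m n :=
  rsum K (fun k => bb f k m * kappa (INR n / fs - dist3 (rk f k) (mic m) / c) / (4 * PI)).
Definition Grel kappa c fs lambda M N K mic (x : nat -> nat -> R) f :=
  / 2 * rsum M (fun m => rsum N (fun n => (x m n - relsum kappa c fs mic K f m n) ^ 2))
  + lambda * rsum K (fun k => f (k, 0%nat)).
Definition Vc c fs M N K mic (f : nat * nat -> R) :=
  rsum K (fun k => rsum M (fun m => Rabs (bb f k m * dist3 (rk f k) (mic m) - f (k, 0%nat))
     + (Rabs (dist3 (rk f k) (mic m) - Dr c fs N) + (dist3 (rk f k) (mic m) - Dr c fs N)))).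

Lemma Vc_zero c fs M N K mic f : Vc c fs M N K mic f = 0 ->
  forall k m, (k < K)%nat -> (m < M)%nat ->
  bb f k m * dist3 (rk f k) (mic m) = f (k, 0%nat) /\ dist3 (rk f k) (mic m) <= Dr c fs N.
Proof.
  intros H k m Hk Hm. unfold Vc in H.
  assert (Hnn : forall k m, 0 <= Rabs (bb f k m * dist3 (rk f k) (mic m) - f (k, 0%nat))
     + (Rabs (dist3 (rk f k) (mic m) - Dr c fs N) + (dist3 (rk f k) (mic m) - Dr c fs N))).
  { intros k' m'. pose proof (Rabs_pos (bb f k' m' * dist3 (rk f k') (mic m') - f (k', 0%nat))).
    pose proof (Rabs_maj2 (dist3 (rk f k') (mic m') - Dr c fs N)). lra. }
  pose proof (rsum_eq0 _ _ (fun k' _ => rsum_ge0 _ _ (fun m' _ => Hnn k' m')) H k Hk) as H1.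
  pose proof (rsum_eq0 _ _ (fun m' _ => Hnn k m') H1 m Hm) as H2. cbv beta in H2.
  pose proof (Rabs_pos (bb f k m * dist3 (rk f k) (mic m) - f (k, 0%nat))).
  pose proof (Rabs_maj2 (dist3 (rk f k) (mic m) - Dr c fs N)).
  assert (E1 : Rabs (bb f k m * dist3 (rk f k) (mic m) - f (k, 0%nat)) = 0) by lra.
  split.
  - destruct (Req_dec (bb f k m * dist3 (rk f k) (mic m) - f (k, 0%nat)) 0) as [E|E]; [lra|].
    apply Rabs_no_R0 in E. contradiction.
  - destruct (Rle_dec (dist3 (rk f k) (mic m)) (Dr c fs N)) as [|Hn]; [assumption|].
    apply Rnot_le_lt in Hn. rewrite (Rabs_right (dist3 (rk f k) (mic m) - Dr c fs N)) in H2 by lra. lra.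
Qed.

Lemma Vc_of c fs M N K mic f :
  (forall k m, (k < K)%nat -> (m < M)%nat ->
    bb f k m * dist3 (rk f k) (mic m) = f (k, 0%nat) /\ dist3 (rk f k) (mic m) <= Dr c fs N) ->
  Vc c fs M N K mic f = 0.
Proof.
  intros H. unfold Vc. apply rsum_zero. intros k Hk. apply rsum_zero. intros m Hm.
  destruct (H k m Hk Hm) as [E1 E2]. rewrite E1, Rminus_diag, Rabs_R0.
  rewrite Rabs_left1 by lra. ring.
Qed.

Definition rstar (p : nat * nat -> R) (r0 : pt3) k :=
  if Rlt_dec 0 (p (k, 0%nat)) then rk p k else r0.

Lemma key kappa c fs lambda M N K mic x p r0 phi
 (Hc : 0 < c)
 (Ha : forall k, (k < K)%nat -> 0 <= p (k, 0%nat))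
 (Hb : forall k m, (k < K)%nat -> (m < M)%nat ->
        0 <= bb p k m /\ bb p k m * dist3 (rk p k) (mic m) = p (k, 0%nat))
 (Hphi : forall t, 0 < t -> phi <= rsum N (fun n => kappa (INR n / fs) * kappa (INR n / fs - t) / (4 * PI * c * t)))
 (Hmu : forall m, (m < M)%nat -> mu kappa fs N x m - phi * rsum K (fun k => p (k, 0%nat)) <= 0) :
 objective kappa c fs lambda M N K mic x (fun k => p (k, 0%nat)) (rstar p r0)
   <= Grel kappa c fs lambda M N K mic x p.
Proof.
  assert (PIpos := PI_RGT_0).
  unfold objective, Grel.
  set (G := fun m n => rsum K (fun k => p (k, 0%nat) * gamma kappa c fs mic (rstar p r0 k) m n)).
  set (S := relsum kappa c fs mic K p).
  set (W := fun m n => rsum K (fun k => (if Rlt_dec 0 (p (k, 0%nat)) then 0 else bb p k m) * kappa (INR n / fs) / (4 * PI))).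
  set (w := fun m => rsum K (fun k => (if Rlt_dec 0 (p (k, 0%nat)) then 0 else bb p k m) / (4 * PI))).
  assert (HGSW : forall m n, (m < M)%nat -> G m n = S m n - W m n).
  { intros m n Hm. unfold G, S, W, relsum. rewrite <- rsum_minus. apply rsum_ext. intros k Hk.
    destruct (Hb k m Hk Hm) as [Hb0 Hbd]. unfold rstar.
    destruct (Rlt_dec 0 (p (k, 0%nat))) as [Hp|Hp].
    - unfold gamma. assert (Hd : dist3 (rk p k) (mic m) <> 0).
      { intros E. rewrite E, Rmult_0_r in Hbd. lra. }
      rewrite <- Hbd. field. split; [lra| exact Hd].
    - assert (Hp0 : p (k, 0%nat) = 0) by (specialize (Ha k Hk); apply Rnot_lt_le in Hp; lra).
      rewrite Hp0. rewrite Hp0 in Hbd. apply Rmult_integral in Hbd. destruct Hbd as [E|E].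
      + rewrite E. field. lra.
      + rewrite E. replace (0 / c) with 0 by (unfold Rdiv; ring). rewrite Rminus_0_r. field. lra. }
  assert (HW : forall m n, W m n = kappa (INR n / fs) * w m).
  { intros m n. unfold W, w. rewrite <- rsum_scal. apply rsum_ext. intros k _. unfold Rdiv. ring. }
  assert (Hw : forall m, (m < M)%nat -> 0 <= w m).
  { intros m Hm. unfold w. apply rsum_ge0. intros k Hk. destruct (Rlt_dec 0 (p (k, 0%nat))).
    - unfold Rdiv; lra.
    - destruct (Hb k m Hk Hm). apply Rmult_le_pos; [lra|]. apply Rlt_le, Rinv_0_lt_compat. lra. }
  assert (Hinner : forall m, (m < M)%nat -> rsum N (fun n => (x m n - G m n) * kappa (INR n / fs)) <= 0).
  { intros m Hm.
    assert (E1 : rsum N (fun n => (x m n - G m n) * kappa (INR n / fs)) =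
                 mu kappa fs N x m - rsum K (fun k => rsum N (fun n => p (k, 0%nat) * gamma kappa c fs mic (rstar p r0 k) m n * kappa (INR n / fs)))).
    { unfold mu. rewrite <- rsum_swap. rewrite <- rsum_minus. apply rsum_ext. intros n _.
      unfold G. rewrite rsum_scalr. ring. }
    assert (E2 : phi * rsum K (fun k => p (k, 0%nat)) <= rsum K (fun k => rsum N (fun n => p (k, 0%nat) * gamma kappa c fs mic (rstar p r0 k) m n * kappa (INR n / fs)))).
    { rewrite <- rsum_scal. apply rsum_le. intros k Hk.
      destruct (Hb k m Hk Hm) as [Hb0 Hbd]. unfold rstar.
      destruct (Rlt_dec 0 (p (k, 0%nat))) as [Hp|Hp].
      - assert (Hd : dist3 (rk p k) (mic m) <> 0).
        { intros E. rewrite E, Rmult_0_r in Hbd. lra. }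
        assert (Hd' : 0 < dist3 (rk p k) (mic m)) by (pose proof (dist3_ge0 (rk p k) (mic m)); lra).
        set (d := dist3 (rk p k) (mic m)) in *.
        assert (E : rsum N (fun n => p (k, 0%nat) * gamma kappa c fs mic (rk p k) m n * kappa (INR n / fs)) =
                    p (k, 0%nat) * rsum N (fun n => kappa (INR n / fs) * kappa (INR n / fs - d / c) / (4 * PI * c * (d / c)))).
        { rewrite <- rsum_scal. apply rsum_ext. intros n _. unfold gamma. fold d. field. lra. }
        rewrite E. specialize (Hphi (d / c)). assert (0 < d / c) by (apply Rdiv_lt_0_compat; lra).
        specialize (Hphi H). rewrite (Rmult_comm phi). apply Rmult_le_compat_l; lra.
      - assert (Hp0 : p (k, 0%nat) = 0) by (specialize (Ha k Hk); apply Rnot_lt_le in Hp; lra).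
        rewrite Hp0. rewrite rsum_zero; [lra|]. intros n _. ring. }
    specialize (Hmu m Hm). lra. }
  assert (Hm1 : forall m, (m < M)%nat -> rsum N (fun n => (x m n - G m n) ^ 2) <=
                                     rsum N (fun n => (x m n - S m n) ^ 2)).
  { intros m Hm.
    assert (E : rsum N (fun n => (x m n - G m n) ^ 2) =
                rsum N (fun n => (x m n - S m n) ^ 2) +
                (2 * w m * rsum N (fun n => (x m n - G m n) * kappa (INR n / fs)) -
                 rsum N (fun n => W m n ^ 2))).
    { rewrite <- rsum_scal. rewrite <- rsum_minus. rewrite <- rsum_plus. apply rsum_ext. intros n _.
      rewrite HGSW by exact Hm. rewrite HW. ring. }
    rewrite E. assert (0 <= rsum N (fun n => W m n ^ 2)) by (apply rsum_ge0; intros; apply pow2_ge_0).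
    specialize (Hinner m Hm). specialize (Hw m Hm).
    assert (w m * rsum N (fun n => (x m n - G m n) * kappa (INR n / fs)) <= 0).
    { nra. }
    lra. }
  apply Rplus_le_compat_r. apply Rmult_le_compat_l; [lra|].
  apply rsum_le. intros m Hm. exact (Hm1 m Hm).
Qed.

Lemma feas_rstar c fs M N K mic p r0
  (Hr0 : inC c fs M N mic r0)
  (Ha : forall k, (k < K)%nat -> 0 <= p (k, 0%nat))
  (Hb : forall k m, (k < K)%nat -> (m < M)%nat ->
        bb p k m * dist3 (rk p k) (mic m) = p (k, 0%nat) /\ dist3 (rk p k) (mic m) <= Dr c fs N) :
  feasible c fs M N K mic (fun k => p (k, 0%nat)) (rstar p r0).
Proof.
  intros k Hk. split; [apply Ha; exact Hk|]. unfold rstar.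
  destruct (Rlt_dec 0 (p (k, 0%nat))) as [Hp|Hp]; [|exact Hr0].
  split.
  - intros m Hm. destruct (Hb k m Hk Hm) as [_ H]. exact H.
  - intros [m [Hm E]]. destruct (Hb k m Hk Hm) as [H _]. rewrite E, dist3_self, Rmult_0_r in H. lra.
Qed.

Lemma quad_ge0 M N (y : nat -> nat -> R) : 0 <= rsum M (fun m => rsum N (fun n => (y m n) ^ 2)).
Proof. apply rsum_ge0; intros; apply rsum_ge0; intros; apply pow2_ge_0. Qed.

Lemma quad_term M N (y : nat -> nat -> R) m n : (m < M)%nat -> (n < N)%nat ->
  (y m n) ^ 2 <= rsum M (fun m => rsum N (fun n => (y m n) ^ 2)).
Proof. intros Hm Hn.
  apply Rle_trans with (rsum N (fun n => (y m n) ^ 2)).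
  - apply (rsum_term_le N (fun n => y m n ^ 2)); [intros; apply pow2_ge_0|exact Hn].
  - apply (rsum_term_le M (fun m => rsum N (fun n => y m n ^ 2))); [intros; apply rsum_ge0; intros; apply pow2_ge_0|exact Hm].
Qed.

Lemma Grel_f0 kappa c fs lambda M N K mic x f0
  (H0 : forall k, (k < K)%nat -> f0 (k, 0%nat) = 0)
  (Hb0 : forall k m, (k < K)%nat -> (m < M)%nat -> bb f0 k m = 0) :
  Grel kappa c fs lambda M N K mic x f0 = / 2 * sqnorm_x M N x.
Proof.
  unfold Grel, sqnorm_x. rewrite (rsum_zero K (fun k => f0 (k, 0%nat))) by exact H0.
  rewrite Rmult_0_r, Rplus_0_r. f_equal. apply rsum_ext. intros m Hm. apply rsum_ext. intros n Hn.
  unfold relsum. rewrite rsum_zero; [ring|]. intros k Hk. rewrite Hb0 by assumption. unfold Rdiv. ring.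
Qed.

Lemma Grel_lb kappa c fs lambda M N K mic x f (Hlam : 0 < lambda) :
  lambda * rsum K (fun k => f (k, 0%nat)) <= Grel kappa c fs lambda M N K mic x f.
Proof. unfold Grel. pose proof (quad_ge0 M N (fun m n => x m n - relsum kappa c fs mic K f m n)). cbv beta in H. lra. Qed.

Lemma obj_lb kappa c fs lambda M N K mic x a r :
  lambda * rsum K a <= objective kappa c fs lambda M N K mic x a r.
Proof. unfold objective. pose proof (quad_ge0 M N (fun m n => x m n - rsum K (fun k => a k * gamma kappa c fs mic (r k) m n))). cbv beta in H. lra. Qed.

Lemma Grel_q kappa c fs lambda M N K mic x q a r
  (Ha : forall k, (k < K)%nat -> q (k, 0%nat) = a k)
  (Hr : forall k, (k < K)%nat -> rk q k = r k)
  (Hb : forall k m, (k < K)%nat -> (m < M)%nat -> bb q k m = a k / dist3 (r k) (mic m))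
  (Hd : forall k m, (k < K)%nat -> (m < M)%nat -> dist3 (r k) (mic m) <> 0) :
  Grel kappa c fs lambda M N K mic x q = objective kappa c fs lambda M N K mic x a r.
Proof.
  assert (PIpos := PI_RGT_0).
  unfold Grel, objective. rewrite (rsum_ext K (fun k => q (k, 0%nat)) a) by exact Ha.
  f_equal. f_equal. apply rsum_ext. intros m Hm. apply rsum_ext. intros n Hn.
  unfold relsum. f_equal. f_equal. apply rsum_ext. intros k Hk.
  rewrite Hb by assumption. rewrite Hr by assumption. unfold gamma. field.
  split; [apply Hd; assumption| lra].
Qed.

Lemma dist_pos_feas c fs M N K mic a r k m : feasible c fs M N K mic a r ->
  (k < K)%nat -> (m < M)%nat -> 0 < dist3 (r k) (mic m).
Proof. intros Hf Hk Hm. destruct (Hf k Hk) as [_ [_ HE]].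
  pose proof (dist3_ge0 (r k) (mic m)). destruct (Req_dec (dist3 (r k) (mic m)) 0) as [E|E]; [|lra].
  exfalso. apply HE. exists m. split; [exact Hm|]. apply dist3_eq0. exact E. Qed.

Lemma bbound kappa c fs lambda M N K mic x a r B del
 (Hc : 0 < c) (Hlam : 0 < lambda) (HN : (1 <= N)%nat) (HB : forall t, Rabs (kappa t) <= B)
 (Hk0 : 0 < kappa 0) (Hdel : 0 < del)
 (Hdk : forall d, 0 <= d <= del -> kappa 0 / 2 <= kappa (INR 0 / fs - d / c))
 (Hfeas : feasible c fs M N K mic a r)
 (Hobj : objective kappa c fs lambda M N K mic x a r <= / 2 * sqnorm_x M N x) :
 forall k m, (k < K)%nat -> (m < M)%nat ->
 0 <= a k / dist3 (r k) (mic m) <=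
   8 * PI * (2 * (1 + sqnorm_x M N x) + INR K * (sqnorm_x M N x / (2 * lambda) * B / (4 * PI * del))) / kappa 0
   + sqnorm_x M N x / (2 * lambda) / del.
Proof.
  intros k0 m Hk0K Hm.
  assert (PIpos := PI_RGT_0).
  set (X2 := sqnorm_x M N x) in *.
  set (Amax := X2 / (2 * lambda)).
  assert (Hanon : forall k, (k < K)%nat -> 0 <= a k) by (intros k Hk; apply (Hfeas k Hk)).
  assert (B0 : 0 <= B) by (specialize (HB 0); pose proof (Rabs_pos (kappa 0)); lra).
  assert (X0 : 0 <= X2) by (apply quad_ge0).
  assert (Hsum : rsum K a <= Amax).
  { pose proof (obj_lb kappa c fs lambda M N K mic x a r).
    apply (Rmult_le_reg_l lambda); [lra|]. unfold Amax. replace (lambda * (X2 / (2 * lambda))) with (/ 2 * X2) by (field; lra). lra. }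
  assert (Hak : forall k, (k < K)%nat -> a k <= Amax).
  { intros k Hk. apply Rle_trans with (rsum K a); [apply rsum_term_le; assumption|exact Hsum]. }
  assert (A0 : 0 <= Amax) by (unfold Amax; apply Rdiv_le_0_compat; lra).
  set (res := fun m n => x m n - rsum K (fun k => a k * gamma kappa c fs mic (r k) m n)).
  assert (Hquad : rsum M (fun m => rsum N (fun n => (res m n) ^ 2)) <= X2).
  { unfold objective in Hobj. unfold res.
    assert (0 <= lambda * rsum K a) by (apply Rmult_le_pos; [lra|apply rsum_ge0; assumption]). lra. }
  assert (Hr2 : (res m 0%nat) ^ 2 <= X2).
  { eapply Rle_trans; [apply (quad_term M N res m 0%nat Hm); lia|exact Hquad]. }
  assert (Hx2 : (x m 0%nat) ^ 2 <= X2).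
  { unfold X2, sqnorm_x. apply (quad_term M N x m 0%nat Hm); lia. }
  set (G := rsum K (fun k => a k * gamma kappa c fs mic (r k) m 0%nat)).
  assert (HG : G <= 2 * (1 + X2)).
  { assert (E : G = x m 0%nat - res m 0%nat) by (unfold res, G; ring).
    pose proof (sq_le_abs _ _ Hr2). pose proof (sq_le_abs _ _ Hx2).
    pose proof (Rle_abs (x m 0%nat)). pose proof (Rabs_maj2 (res m 0%nat)). lra. }
  set (L := Amax * B / (4 * PI * del)).
  assert (L0 : 0 <= L) by (unfold L; apply Rdiv_le_0_compat; [apply Rmult_le_pos; lra| apply Rmult_lt_0_compat; [lra|lra]]).
  assert (Hdk' : forall k, (k < K)%nat -> dist3 (r k) (mic m) <= del -> kappa 0 / 2 <= kappa (INR 0 / fs - dist3 (r k) (mic m) / c)).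
  { intros k Hk Hd. apply Hdk. split; [apply dist3_ge0|exact Hd]. }
  assert (Htlow : forall k, (k < K)%nat -> - L <= a k * gamma kappa c fs mic (r k) m 0%nat).
  { intros k Hk. unfold gamma.
    pose proof (dist_pos_feas c fs M N K mic a r k m Hfeas Hk Hm) as Hd.
    pose proof (Hdk' k Hk) as Hdkk.
    set (d := dist3 (r k) (mic m)) in *.
    set (kv := kappa (INR 0 / fs - d / c)) in *.
    assert (H4d : 0 < 4 * PI * d) by (apply Rmult_lt_0_compat; lra).
    set (z := kv / (4 * PI * d)).
    replace (a k * (kv / (4 * PI * d))) with (a k * z) by reflexivity.
    destruct (Rle_dec d del) as [Hdd|Hdd].
    - assert (0 <= z) by (unfold z; apply Rdiv_le_0_compat; [specialize (Hdkk Hdd); lra|lra]).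
      assert (0 <= a k * z) by (apply Rmult_le_pos; [apply Hanon; exact Hk|lra]). lra.
    - apply Rnot_le_lt in Hdd.
      set (Z := B / (4 * PI * del)).
      assert (HzZ : Rabs z <= Z).
      { unfold z, Z, Rdiv. rewrite Rabs_mult. rewrite (Rabs_right (/ (4 * PI * d))) by (apply Rle_ge, Rlt_le, Rinv_0_lt_compat; lra).
        apply Rmult_le_compat; [apply Rabs_pos| apply Rlt_le, Rinv_0_lt_compat; lra| apply HB|].
        apply Rinv_le_contravar; [apply Rmult_lt_0_compat; lra|]. apply Rmult_le_compat_l; lra. }
      assert (Z0 : 0 <= Z) by (unfold Z; apply Rdiv_le_0_compat; [lra| apply Rmult_lt_0_compat; lra]).
      pose proof (Rabs_maj2 z).
      assert (EL : L = Amax * Z) by (unfold L, Z, Rdiv; ring).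
      pose proof (Hanon k Hk). pose proof (Hak k Hk). rewrite EL. nra. }
  assert (Htk0 : a k0 * gamma kappa c fs mic (r k0) m 0%nat <= G + INR K * L).
  { apply (rsum_term_le_L K (fun k => a k * gamma kappa c fs mic (r k) m 0%nat) k0 L L0 Htlow Hk0K). }
  pose proof (dist_pos_feas c fs M N K mic a r k0 m Hfeas Hk0K Hm) as Hd0.
  pose proof (Hdk' k0 Hk0K) as Hdkk.
  pose proof (Hanon k0 Hk0K) as Ha0. pose proof (Hak k0 Hk0K) as Ha0'.
  unfold gamma in Htk0.
  set (d := dist3 (r k0) (mic m)) in *.
  set (kv := kappa (INR 0 / fs - d / c)) in *.
  set (u := a k0 / d).
  assert (u0 : 0 <= u) by (unfold u; apply Rdiv_le_0_compat; lra).
  set (R0 := 2 * (1 + X2) + INR K * L).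
  assert (R00 : 0 <= R0) by (unfold R0; pose proof (pos_INR K); assert (0 <= INR K * L) by (apply Rmult_le_pos; lra); lra).
  assert (Hfirst : 0 <= 8 * PI * R0 / kappa 0) by (apply Rdiv_le_0_compat; [apply Rmult_le_pos; lra|lra]).
  assert (Hsecond : 0 <= Amax / del) by (apply Rdiv_le_0_compat; lra).
  split; [exact u0|]. fold R0. fold Amax.
  destruct (Rle_dec d del) as [Hdd|Hdd].
  - specialize (Hdkk Hdd).
    assert (ET : a k0 * (kv / (4 * PI * d)) = u * kv / (4 * PI)) by (unfold u; field; lra).
    rewrite ET in Htk0.
    assert (Hukv : u * kv <= 4 * PI * R0).
    { assert (E2 : u * kv = 4 * PI * (u * kv / (4 * PI))) by (field; lra).
      rewrite E2. apply Rmult_le_compat_l; [lra|]. unfold R0; lra. }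
    assert (Huk0 : u * kappa 0 <= 8 * PI * R0) by nra.
    assert (u <= 8 * PI * R0 / kappa 0).
    { apply (Rmult_le_reg_r (kappa 0)); [lra|]. replace (8 * PI * R0 / kappa 0 * kappa 0) with (8 * PI * R0) by (field; lra). exact Huk0. }
    lra.
  - apply Rnot_le_lt in Hdd.
    assert (u <= Amax / del).
    { unfold u, Rdiv. apply Rmult_le_compat; [lra| apply Rlt_le, Rinv_0_lt_compat; lra| exact Ha0'|].
      apply Rinv_le_contravar; lra. }
    lra.
Qed.

Lemma a_le kappa c fs lambda M N K mic x a r (Hlam : 0 < lambda)
 (Hfeas : feasible c fs M N K mic a r)
 (Hobj : objective kappa c fs lambda M N K mic x a r <= / 2 * sqnorm_x M N x) :
 forall k, (k < K)%nat -> 0 <= a k <= sqnorm_x M N x / (2 * lambda).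
Proof.
  intros k Hk. assert (Hanon : forall k, (k < K)%nat -> 0 <= a k) by (intros k' Hk'; apply (Hfeas k' Hk')).
  split; [auto|].
  apply Rle_trans with (rsum K a); [apply rsum_term_le; assumption|].
  pose proof (obj_lb kappa c fs lambda M N K mic x a r).
  apply (Rmult_le_reg_l lambda); [lra|]. replace (lambda * (sqnorm_x M N x / (2 * lambda))) with (/ 2 * sqnorm_x M N x) by (field; lra). lra.
Qed.

Lemma abs_box u v D : Rabs (u - v) <= D -> v - D <= u <= v + D.
Proof. intros H. pose proof (Rle_abs (u - v)). pose proof (Rabs_maj2 (u - v)). lra. Qed.

Definition loF (D : R) (mic0 : pt3) (i : nat * nat) : R :=
  match snd i with
  | 1%nat => fst (fst mic0) - D | 2%nat => snd (fst mic0) - D | 3%nat => snd mic0 - D | _ => 0 end.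
Definition hiF (D Amax Bb : R) (mic0 : pt3) (i : nat * nat) : R :=
  match snd i with
  | 0%nat => Amax
  | 1%nat => fst (fst mic0) + D | 2%nat => snd (fst mic0) + D | 3%nat => snd mic0 + D | _ => Bb end.
Definition f0F (r0 : pt3) (i : nat * nat) : R :=
  match snd i with
  | 1%nat => fst (fst r0) | 2%nat => snd (fst r0) | 3%nat => snd r0 | _ => 0 end.
Definition qF (K M : nat) (mic : nat -> pt3) (a : nat -> R) (r : nat -> pt3) (r0 : pt3) (i : nat * nat) : R :=
  let (k, j) := i in
  if Nat.ltb k K then
    match j with
    | 0%nat => a k | 1%nat => fst (fst (r k)) | 2%nat => snd (fst (r k)) | 3%nat => snd (r k)
    | S (S (S (S m))) => if Nat.ltb m M then a k / dist3 (r k) (mic m) else 0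
    end
  else f0F r0 (k, j).

Lemma main_core (c fs lambda : R) (M N K : nat) (mic : nat -> pt3)
    (x : nat -> nat -> R) (kappa : R -> R)
    (Hc : 0 < c) (Hfs : 0 < fs) (HM : (1 <= M)%nat) (HN : (1 <= N)%nat)
    (HK : (1 <= K)%nat) (Hlam : 0 < lambda)
    (Hkc : forall t, continuity_pt kappa t)
    (Hkb : exists B, forall t, Rabs (kappa t) <= B)
    (Hk0 : 0 < kappa 0)
    (HC : exists r0, inC c fs M N mic r0)
    (Hcase :
       (phi_val kappa c fs N < 0 /\
          forall m, (m < M)%nat ->
            mu kappa fs N x m <= phi_val kappa c fs N / (2 * lambda) * sqnorm_x M N x)
       \/
       (0 <= phi_val kappa c fs N /\
          forall m, (m < M)%nat -> mu kappa fs N x m <= 0))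
    (HEVT : forall lo hi : nat * nat -> R,
       (exists f0, (forall i, lo i <= f0 i <= hi i) /\ Vc c fs M N K mic f0 = 0) ->
       exists p, ((forall i, lo i <= p i <= hi i) /\ Vc c fs M N K mic p = 0) /\
         forall q, (forall i, lo i <= q i <= hi i) -> Vc c fs M N K mic q = 0 ->
           Grel kappa c fs lambda M N K mic x p <= Grel kappa c fs lambda M N K mic x q) :
  exists (a : nat -> R) (r : nat -> pt3),
    is_solution kappa c fs lambda M N K mic x a r.
Proof.
  assert (PIpos := PI_RGT_0).
  pose proof (phi_le kappa c fs N Hc HN Hkc Hkb Hk0) as Hphi.
  destruct Hkb as [B HB]. destruct HC as [r0 Hr0].
  set (phi := phi_val kappa c fs N) in *.
  set (X2 := sqnorm_x M N x) in *.
  assert (X0 : 0 <= X2) by (apply quad_ge0).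
  assert (B0 : 0 <= B) by (specialize (HB 0); pose proof (Rabs_pos (kappa 0)); lra).
  assert (Hdel : exists del, 0 < del /\ forall d, 0 <= d <= del -> kappa 0 / 2 <= kappa (INR 0 / fs - d / c)).
  { destruct (Hkc 0 (kappa 0 / 2)) as [al [Hal Hal2]]; [lra|].
    exists (al * c / 2). split; [apply Rdiv_lt_0_compat; [apply Rmult_lt_0_compat; lra|lra]|].
    intros d Hd. replace (INR 0 / fs - d / c) with (- (d / c)) by (simpl; field; lra).
    destruct (Req_dec d 0) as [E|E].
    - rewrite E. replace (- (0 / c)) with 0 by (field; lra). lra.
    - assert (Hdc : 0 < d / c) by (apply Rdiv_lt_0_compat; lra).
      assert (Hdc2 : d / c <= al / 2).
      { apply (Rmult_le_reg_r c); [lra|]. replace (d / c * c) with d by (field; lra). lra. }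
      assert (Hk := Hal2 (- (d / c))).
      assert (Hin : D_x no_cond 0 (- (d / c)) /\ dist R_met (- (d / c)) 0 < al).
      { split. { split; [exact I|]. lra. } simpl. unfold R_dist. rewrite Rminus_0_r, Rabs_Ropp, Rabs_right by lra. lra. }
      specialize (Hk Hin). simpl in Hk. unfold R_dist in Hk. apply Rabs_def2 in Hk. lra. }
  destruct Hdel as [del [Hdel Hdk]].
  set (D := Dr c fs N).
  set (Amax := X2 / (2 * lambda)).
  assert (A0 : 0 <= Amax) by (unfold Amax; apply Rdiv_le_0_compat; lra).
  set (Bb := 8 * PI * (2 * (1 + X2) + INR K * (X2 / (2 * lambda) * B / (4 * PI * del))) / kappa 0 + X2 / (2 * lambda) / del).
  assert (Bb0 : 0 <= Bb).
  { unfold Bb. assert (0 <= X2 / (2 * lambda) * B / (4 * PI * del)).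
    { apply Rdiv_le_0_compat; [apply Rmult_le_pos; [apply Rdiv_le_0_compat; lra|lra]|apply Rmult_lt_0_compat; lra]. }
    pose proof (pos_INR K). assert (0 <= INR K * (X2 / (2 * lambda) * B / (4 * PI * del))) by (apply Rmult_le_pos; lra).
    assert (0 <= 8 * PI * (2 * (1 + X2) + INR K * (X2 / (2 * lambda) * B / (4 * PI * del))) / kappa 0)
      by (apply Rdiv_le_0_compat; [apply Rmult_le_pos; lra|lra]).
    assert (0 <= X2 / (2 * lambda) / del) by (apply Rdiv_le_0_compat; [apply Rdiv_le_0_compat; lra|lra]).
    lra. }
  set (lo := loF D (mic 0%nat)). set (hi := hiF D Amax Bb (mic 0%nat)).
  set (f0 := f0F r0).
  assert (Hr0m : dist3 r0 (mic 0%nat) <= D) by (apply (proj1 Hr0); lia).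
  assert (Hf0box : forall i, lo i <= f0 i <= hi i).
  { intros [k j]. unfold lo, hi, f0, loF, hiF, f0F. simpl.
    destruct r0 as [[s1 s2] s3].
    destruct j as [|[|[|[|j]]]]; simpl; try lra.
    - apply abs_box. apply (Rle_trans _ _ _ (dist3_c1 s1 s2 s3 (mic 0%nat))). exact Hr0m.
    - apply abs_box. apply (Rle_trans _ _ _ (dist3_c2 s1 s2 s3 (mic 0%nat))). exact Hr0m.
    - apply abs_box. apply (Rle_trans _ _ _ (dist3_c3 s1 s2 s3 (mic 0%nat))). exact Hr0m. }
  assert (Hrkf0 : forall k, rk f0 k = r0) by (intros k; unfold rk, f0, f0F; simpl; destruct r0 as [[? ?] ?]; reflexivity).
  assert (HVf0 : Vc c fs M N K mic f0 = 0).
  { apply Vc_of. intros k m Hk Hm. rewrite Hrkf0. split.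
    - unfold bb, f0, f0F. simpl. ring.
    - apply (proj1 Hr0); exact Hm. }
  assert (HGf0 : Grel kappa c fs lambda M N K mic x f0 = / 2 * X2).
  { apply Grel_f0; intros; reflexivity. }
  destruct (HEVT lo hi (ex_intro _ f0 (conj Hf0box HVf0))) as [p [[Hpbox HpV] Hmin]].
  pose proof (Vc_zero c fs M N K mic p HpV) as HpVz.
  assert (Ha : forall k, (k < K)%nat -> 0 <= p (k, 0%nat)) by (intros k _; apply (Hpbox (k, 0%nat))).
  assert (Hb : forall k m, (k < K)%nat -> (m < M)%nat ->
        0 <= bb p k m /\ bb p k m * dist3 (rk p k) (mic m) = p (k, 0%nat)).
  { intros k m Hk Hm. split; [apply (Hpbox (k, S (S (S (S m)))))|apply (HpVz k m Hk Hm)]. }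
  assert (HGp : Grel kappa c fs lambda M N K mic x p <= / 2 * X2).
  { rewrite <- HGf0. apply Hmin; assumption. }
  assert (Hsum : rsum K (fun k => p (k, 0%nat)) <= Amax).
  { pose proof (Grel_lb kappa c fs lambda M N K mic x p Hlam).
    apply (Rmult_le_reg_l lambda); [lra|]. unfold Amax. replace (lambda * (X2 / (2 * lambda))) with (/ 2 * X2) by (field; lra). lra. }
  assert (Hsum0 : 0 <= rsum K (fun k => p (k, 0%nat))) by (apply rsum_ge0; exact Ha).
  assert (Hmu : forall m, (m < M)%nat -> mu kappa fs N x m - phi * rsum K (fun k => p (k, 0%nat)) <= 0).
  { intros m Hm. destruct Hcase as [[Hph Hm1]|[Hph Hm1]].
    - specialize (Hm1 m Hm).
      assert (phi * Amax <= phi * rsum K (fun k => p (k, 0%nat))) by (apply Rmult_le_compat_neg_l; lra).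
      assert (E : phi / (2 * lambda) * X2 = phi * Amax) by (unfold Amax; field; lra).
      lra.
    - specialize (Hm1 m Hm). assert (0 <= phi * rsum K (fun k => p (k, 0%nat))) by (apply Rmult_le_pos; lra). lra. }
  pose proof (key kappa c fs lambda M N K mic x p r0 phi Hc Ha Hb Hphi Hmu) as Hkey.
  exists (fun k => p (k, 0%nat)), (rstar p r0). split.
  { apply feas_rstar; [exact Hr0|exact Ha|exact HpVz]. }
  intros a' r' Hf'.
  apply (Rle_trans _ _ _ Hkey).
  destruct (Rle_dec (objective kappa c fs lambda M N K mic x a' r') (/ 2 * X2)) as [Hob|Hob].
  - set (q := qF K M mic a' r' r0).
    assert (HqK : forall k j, (k < K)%nat -> q (k, j) = match j with
        | 0%nat => a' k | 1%nat => fst (fst (r' k)) | 2%nat => snd (fst (r' k)) | 3%nat => snd (r' k)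
        | S (S (S (S m))) => if Nat.ltb m M then a' k / dist3 (r' k) (mic m) else 0 end).
    { intros k j Hk. unfold q, qF. apply Nat.ltb_lt in Hk. rewrite Hk. reflexivity. }
    assert (Hq0 : forall k, (k < K)%nat -> q (k, 0%nat) = a' k) by (intros k Hk; rewrite HqK; auto).
    assert (Hqr : forall k, (k < K)%nat -> rk q k = r' k).
    { intros k Hk. unfold rk. rewrite !HqK by exact Hk. destruct (r' k) as [[? ?] ?]; reflexivity. }
    assert (Hqb : forall k m, (k < K)%nat -> (m < M)%nat -> bb q k m = a' k / dist3 (r' k) (mic m)).
    { intros k m Hk Hm. unfold bb. rewrite HqK by exact Hk. apply Nat.ltb_lt in Hm. rewrite Hm. reflexivity. }
    assert (Hdpos : forall k m, (k < K)%nat -> (m < M)%nat -> 0 < dist3 (r' k) (mic m))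
      by (intros; eapply dist_pos_feas; eauto).
    assert (Hqbox : forall i, lo i <= q i <= hi i).
    { intros [k j]. destruct (Nat.ltb k K) eqn:Ek.
      - apply Nat.ltb_lt in Ek. rewrite HqK by exact Ek. unfold lo, hi, loF, hiF. simpl.
        assert (Hrm : dist3 (r' k) (mic 0%nat) <= D) by (apply (proj1 (proj2 (Hf' k Ek))); lia).
        destruct j as [|[|[|[|m]]]].
        + apply (a_le kappa c fs lambda M N K mic x a' r' Hlam Hf' Hob k Ek).
        + destruct (r' k) as [[s1 s2] s3]. simpl. apply abs_box. apply (Rle_trans _ _ _ (dist3_c1 s1 s2 s3 (mic 0%nat))). exact Hrm.
        + destruct (r' k) as [[s1 s2] s3]. simpl. apply abs_box. apply (Rle_trans _ _ _ (dist3_c2 s1 s2 s3 (mic 0%nat))). exact Hrm.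
        + destruct (r' k) as [[s1 s2] s3]. simpl. apply abs_box. apply (Rle_trans _ _ _ (dist3_c3 s1 s2 s3 (mic 0%nat))). exact Hrm.
        + destruct (Nat.ltb m M) eqn:Em; [|lra].
          apply Nat.ltb_lt in Em.
          exact (bbound kappa c fs lambda M N K mic x a' r' B del Hc Hlam HN HB Hk0 Hdel Hdk Hf' Hob k m Ek Em).
      - unfold q, qF. rewrite Ek. apply Hf0box. }
    assert (HqV : Vc c fs M N K mic q = 0).
    { apply Vc_of. intros k m Hk Hm. rewrite Hqr, Hqb, Hq0 by assumption. split.
      - specialize (Hdpos k m Hk Hm). field. lra.
      - apply (proj1 (proj2 (Hf' k Hk))). exact Hm. }
    rewrite <- (Grel_q kappa c fs lambda M N K mic x q a' r' Hq0 Hqr Hqb).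
    + apply Hmin; assumption.
    + intros k m Hk Hm. specialize (Hdpos k m Hk Hm). lra.
  - apply Rnot_le_lt in Hob. lra.
Qed.

From mathcomp Require Import all_boot all_order all_algebra.
From mathcomp Require Import all_classical all_reals.
From mathcomp Require Import topology normedtype derive Rstruct Rstruct_topology.
Import ArrowAsProduct.
Open Scope R_scope.

Definition TT := prod_topology (fun _ : (nat * nat)%type => R).
Definition Cont (G : (nat * nat -> R) -> R) : Prop := continuous (G : TT -> R).

Lemma cproj i : Cont (fun f => f i).
Proof. exact: proj_continuous. Qed.
Lemma cplus (g h : (nat * nat -> R) -> R) : Cont g -> Cont h -> Cont (fun f => Rplus (g f) (h f)).
Proof. move=> cg ch x. apply: (@continuousD R R^o TT g h x); [exact: cg|exact: ch]. Qed.
Lemma cmult (g h : (nat * nat -> R) -> R) : Cont g -> Cont h -> Cont (fun f => Rmult (g f) (h f)).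
Proof. move=> cg ch x. apply: (@continuousM R TT g h x); [exact: cg|exact: ch]. Qed.
Lemma ccomp (g : (nat * nat -> R) -> R) (F : R -> R) : Cont g -> (forall f, continuity_pt F (g f)) -> Cont (fun f => F (g f)).
Proof. move=> cg cF x. apply: (@continuous_comp TT _ _ g F x); first exact: cg. apply/continuity_pt_cvg. exact: cF. Qed.
Lemma cconst (y : R) : Cont (fun f => y).
Proof. move=> x; exact: cst_continuous. Qed.
Lemma copp g : Cont g -> Cont (fun f => - g f).
Proof. move=> cg. apply: (ccomp g Ropp cg) => f. apply: continuity_pt_opp. apply: derivable_continuous_pt. apply: derivable_pt_id. Qed.
Lemma cminus g h : Cont g -> Cont h -> Cont (fun f => g f - h f).
Proof. move=> cg ch. rewrite /Rminus. apply: cplus => //. exact: copp. Qed.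
Lemma cabs g : Cont g -> Cont (fun f => Rabs (g f)).
Proof. move=> cg. apply: (ccomp g Rabs cg) => f. exact: Rcontinuity_abs. Qed.
Lemma cpow2 g : Cont g -> Cont (fun f => (g f) ^ 2).
Proof. move=> cg. have := cmult g (fun f => g f * 1) cg (cmult g _ cg (cconst 1)). by []. Qed.
Lemma crsum n (G : nat -> (nat * nat -> R) -> R) : (forall i, Cont (G i)) -> Cont (fun f => rsum n (fun i => G i f)).
Proof. move=> H; elim: n => [|n IH] /=; first exact: cconst. exact: cplus. Qed.
Lemma cdist3 g1 g2 g3 s : Cont g1 -> Cont g2 -> Cont g3 -> Cont (fun f => dist3 (g1 f, g2 f, g3 f) s).
Proof.
move=> c1 c2 c3. case: s => [[s1 s2] s3] /=.
apply: (ccomp _ sqrt).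
- apply: cplus; [apply: cplus|]; apply: cpow2; apply: cminus => //; exact: cconst.
- move=> f; apply: continuity_pt_sqrt.
  have := pow2_ge_0 (g1 f - s1); have := pow2_ge_0 (g2 f - s2); have := pow2_ge_0 (g3 f - s3). lra.
Qed.

Lemma EVT_T (lo hi : (nat*nat)%type -> R) (V G : (nat * nat -> R) -> R) :
  Cont V -> Cont G ->
  (exists f0, (forall i, lo i <= f0 i <= hi i) /\ V f0 = 0) ->
  exists p, ((forall i, lo i <= p i <= hi i) /\ V p = 0) /\
    forall q, (forall i, lo i <= q i <= hi i) -> V q = 0 -> G p <= G q.
Proof.
rewrite /Cont.
move=> cV cG [f0 [Hf0 Vf0]].
pose A := ([set f : TT | forall i, (`[lo i, hi i]%classic : set R) (f i)] `&` (V @^-1` [set 0]))%classic.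
have memA : forall f : TT, A f <-> ((forall i, lo i <= f i <= hi i) /\ V f = 0).
  move=> f; rewrite /A /=; split.
  - move=> [H1 H2]; split=> // i; have := H1 i; rewrite /= in_itv /= => /andP[/RleP ? /RleP ?]; lra.
  - move=> [H1 H2]; split=> // i; rewrite /= in_itv /=; apply/andP; split; apply/RleP; have := H1 i; lra.
have cA : compact A.
  apply: compact_closedI.
  - have H := (@tychonoff _ (fun _ => R) (fun i => `[lo i, hi i]%classic) (fun i => @segment_compact R (lo i) (hi i))).
    exact: H.
  - move/continuous_closedP: cV; apply; exact: closed_eq.
have A0 : (A !=set0)%classic by exists f0; apply/memA.
have [p pA pmin] := compact_EVT_min A0 cA (continuous_subspaceT cG).
exists p; split; first by apply/memA; rewrite -in_setE.
move=> q Hq Vq; apply/RleP; apply: pmin; rewrite in_setE; by apply/memA; split.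
Qed.

Ltac sc kc := repeat match goal with
 | |- Cont (fun _ => ?c) => apply cconst
 | |- Cont (fun f => rsum _ _) => apply crsum; intro
 | |- Cont (fun f => Rplus _ _) => apply cplus
 | |- Cont (fun f => Rminus _ _) => apply cminus
 | |- Cont (fun f => Rmult _ _) => apply cmult
 | |- Cont (fun f => Rdiv _ _) => unfold Rdiv
 | |- Cont (fun f => Rabs _) => apply cabs
 | |- Cont (fun f => pow _ 2) => apply cpow2
 | |- Cont (fun f => dist3 (_, _, _) _) => apply cdist3
 | |- Cont (fun f => f _) => apply cproj
 | |- Cont (fun f => ?F _) => apply (ccomp _ F); [|intros; apply kc]
 end.

Lemma cont_Vc c fs M N K mic : Cont (Vc c fs M N K mic).
Proof. unfold Vc, bb, rk. sc I. Qed.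

Lemma cont_Grel kappa c fs lambda M N K mic x (Hkc : forall t, continuity_pt kappa t) :
  Cont (Grel kappa c fs lambda M N K mic x).
Proof. unfold Grel, relsum, bb, rk. sc Hkc. Qed.

Theorem theorem2 (c fs lambda : R) (M N K : nat) (mic : nat -> pt3)
    (x : nat -> nat -> R) (kappa : R -> R)
    (Hc : 0 < c) (Hfs : 0 < fs) (HM : (1 <= M)%coq_nat) (HN : (1 <= N)%coq_nat)
    (HK : (1 <= K)%coq_nat) (Hlam : 0 < lambda)
    (Hkc : forall t, continuity_pt kappa t)
    (Hkb : exists B, forall t, Rabs (kappa t) <= B)
    (Hk0 : 0 < kappa 0)
    (HC : exists r0, inC c fs M N mic r0)
    (Hcase :
       (phi_val kappa c fs N < 0 /\
          forall m, (m < M)%coq_nat ->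
            mu kappa fs N x m <= phi_val kappa c fs N / (2 * lambda) * sqnorm_x M N x)
       \/
       (0 <= phi_val kappa c fs N /\
          forall m, (m < M)%coq_nat -> mu kappa fs N x m <= 0)) :
  exists (a : nat -> R) (r : nat -> pt3),
    is_solution kappa c fs lambda M N K mic x a r.
Proof.
  apply (main_core c fs lambda M N K mic x kappa Hc Hfs HM HN HK Hlam Hkc Hkb Hk0 HC Hcase).
  intros lo hi. apply EVT_T; [apply cont_Vc|apply cont_Grel; exact Hkc].
Qed.
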